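(* Let $p$ be a prime with $p\equiv\pm3\pmod 8$, $q=p^s$, let $m$ be an integer with $2^m\mid(q-1)$ and $m\ge 3$ if $p\equiv 3\pmod 8$, $m\ge 2$ if $p\equiv -3\pmod 8$, and let $\lambda$ be a multiplicative character of order $2^m$ on $\mathbb F_q$. For $1\le r\le m$, $0\le t\le m$ and odd integer $c_0$ put $$W_{r,t}(c_0)=\sum_{\substack{j_0=1\\ 2\nmid j_0}}^{2^r-1}G(\lambda^{2^{m-r}j_0})\,\zeta_{2^{m-t}}^{2^{m-r}c_0j_0}.$$ Then $$W_{1,t}(c_0)=\begin{cases}-G(\eta)&\text{if } t=0,\\ G(\eta)&\text{if } t\ge 1,\end{cases}\qquad W_{2,t}(c_0)=\begin{cases}G(\lambda^{2^{m-2}})+G(\bar\lambda^{2^{m-2}})&\text{if } t\ge 2,\\ -\bigl(G(\lambda^{2^{m-2}})+G(\bar\lambda^{2^{m-2}})\bigr)&\text{if } t=1,\\ i^{c_0}\bigl(G(\lambda^{2^{m-2}})-G(\bar\lambda^{2^{m-2}})\bigr)&\text{if } t=0,\end{cases}$$ and, for $3\le r\le m$, $$W_{r,t}(c_0)=\begin{cases} 2^{r-2}\bigl(G(\lambda^{2^{m-r}})+G(\bar\lambda^{2^{m-r}})\bigr)&\text{if } r\le t,\\ -2^{r-2}\bigl(G(\lambda^{2^{m-r}})+G(\bar\lambda^{2^{m-r}})\bigr)&\text{if } r=t+1,\\ 2^{r-2} i^{c_0}\bigl(G(\lambda^{2^{m-r}})-G(\bar\lambda^{2^{m-r}})\bigr)&\text{if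 } r=t+2 \text{ and } p\equiv -3\pmod{8},\\ 2^{r-3} i\sqrt{2}\,\bigl(G(\lambda^{2^{m-r}})-G(\bar\lambda^{2^{m-r}})\bigr)&\text{if } r=t+3,\ p\equiv 3\pmod{8},\ c_0\equiv 1\text{ or }3\pmod{8},\\ -2^{r-3} i\sqrt{2}\,\bigl(G(\lambda^{2^{m-r}})-G(\bar\lambda^{2^{m-r}})\bigr)&\text{if } r=t+3,\ p\equiv 3\pmod{8},\ c_0\equiv 5\text{ or }7\pmod{8},\\ 0&\text{otherwise.} \end{cases}$$
   Context: Multiplicative characters are extended by $\psi(0)=0$; $\bar\lambda$ is the complex conjugate (inverse) character; $\eta$ is the quadratic character of $\mathbb F_q$; $\zeta_k=e^{2\pi i/k}$, $i=\sqrt{-1}$. The Gauss sum of a nontrivial character $\psi$ on $\mathbb F_q$ is $G(\psi)=\sum_{x\in\mathbb F_q}\psi(x)\zeta_p^{\mathrm{Tr}(x)}$, with $\mathrm{Tr}$ the trace from $\mathbb F_q$ to $\mathbb F_p$. *)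

(* Defs.v *)
From HB Require Import structures.
From mathcomp Require Import all_boot all_order all_algebra all_field.
Set Implicit Arguments. Unset Strict Implicit. Unset Printing Implicit Defensive.
Import Order.TTheory GRing.Theory Num.Theory.
Local Open Scope ring_scope.

(* zeta_k = e^{2 pi i / k}: k.-root (-1) is e^{i pi/k} (root of -1 with minimal
   nonnegative argument), so its square is e^{2 pi i/k}. *)
Definition zeta (k : nat) : algC := (k.-root (-1)) ^+ 2.

Definition is_mchar (F : finFieldType) (psi : F -> algC) : Prop :=
  [/\ psi 0 = 0, psi 1 = 1 & forall x y, psi (x * y) = psi x * psi y].

Definition mchar_order (F : finFieldType) (psi : F -> algC) (n : nat) : Prop :=
  [/\ is_mchar psi, (0 < n)%N,
      (forall x : F, x != 0 -> psi x ^+ n = 1) &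
      (forall d : nat, (0 < d < n)%N -> exists2 x : F, x != 0 & psi x ^+ d != 1)].

Definition mchar_pow (F : finFieldType) (psi : F -> algC) (k : nat) : F -> algC :=
  fun x => if x == 0 then 0 else psi x ^+ k.

Definition mchar_conj (F : finFieldType) (psi : F -> algC) : F -> algC :=
  fun x => (psi x)^*.

Definition quad_char (F : finFieldType) : F -> algC :=
  fun x => if x == 0 then 0 else if [exists y : F, y ^+ 2 == x] then 1 else -1.

Definition trF (F : finFieldType) (p s : nat) (x : F) : F :=
  \sum_(k < s) x ^+ (p ^ k).

Definition trN (F : finFieldType) (p s : nat) (x : F) : nat :=
  if [pick k : 'I_p | (k%:R : F) == trF p s x] is Some k then val k else 0%N.

Definition gauss (F : finFieldType) (p s : nat) (psi : F -> algC) : algC :=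
  \sum_(x : F) psi x * zeta p ^+ trN p s x.

Definition Wsum (F : finFieldType) (p s m : nat) (lam : F -> algC)
    (r t : nat) (c0 : int) : algC :=
  \sum_(j0 < 2 ^ r | odd j0)
     gauss p s (mchar_pow lam (2 ^ (m - r) * j0)) *
     zeta (2 ^ (m - t)) ^ (((2 ^ (m - r) * j0)%:Z) * c0).

(* Main.v *)
Require Import Defs.
From HB Require Import structures.
From mathcomp Require Import all_boot all_order all_algebra all_field.
From mathcomp Require Import ring lra zify.
Import Order.TTheory GRing.Theory Num.Theory.
Local Open Scope ring_scope.
Lemma ImN1 : 'Im (-1 : algC) = 0.
Proof. by apply/(Creal_ImP _); rewrite rpredN rpred1. Qed.

Lemma norm_root_unity {z : algC} {n} : (0 < n)%N -> z ^+ n = -1 -> `|z| = 1.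
Proof.
move=> n0 hz; apply/eqP; rewrite -(pexpr_eq1 n0) ?normr_ge0 //.
by rewrite -normrX hz normrN1.
Qed.

Lemma root_even_conj (y : algC) n : ~~ odd n -> y ^+ n = -1 -> (- y^*) ^+ n = -1.
Proof.
move=> ev hy; rewrite exprNn -signr_odd (negbTE ev) expr0 mul1r.
by rewrite -rmorphXn hy rmorphN1.
Qed.

Lemma Re_root_ge0 n : ~~ odd n -> (0 < n)%N -> 0 <= 'Re (n.-root (-1 : algC)).
Proof.
move=> ev n0; set y := n.-root _.
have hy : y ^+ n = -1 by apply: rootCK.
have n1 : (1 < n)%N by case: n n0 ev {y hy} => [|[|]].
have := rootC_Re_max n0 (root_even_conj _ _ ev hy).
rewrite !raddfN /= Im_conj opprK Re_conj => /(_ (Im_rootC_ge0 _ n1)).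
move=> h.
have : 0 <= 'Re y + 'Re y.
  by rewrite -subr_ge0 opprK in h; rewrite addrC.
by rewrite -mulr2n pmulrn_lge0.
Qed.

Lemma root2n n : (0 < n)%N -> ((2 * n).-root (-1 : algC)) ^+ 2 = n.-root (-1).
Proof.
move=> n0.
set y := (2 * n).-root _; set v := n.-root _; set w := y ^+ 2.
have n20 : (0 < 2 * n)%N by rewrite muln_gt0.
have hy : y ^+ (2 * n) = -1 by apply: rootCK.
have hv : v ^+ n = -1 by apply: rootCK.
have hw : w ^+ n = -1 by rewrite /w -exprM.
have ev : ~~ odd (2 * n) by rewrite oddM.
have Rey : 0 <= 'Re y := @Re_root_ge0 _ ev n20.
have Imy : 0 <= 'Im y by apply: Im_rootC_ge0; lia.
have Imw : 0 <= 'Im w by rewrite /w expr2 ImM addr_ge0 // mulr_ge0.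
have Imv : 0 <= 'Im v.
  case: n n0 @v {hv hw n20 hy ev y w Rey Imy Imw} => [|[|n]] // _.
    by rewrite root1C => v; rewrite /v ImN1.
  by move=> v; apply: Im_rootC_ge0.
have le1 : 'Re w <= 'Re v := rootC_Re_max n0 hw Imw.
set u := sqrtC v.
have hu : u ^+ 2 = v by apply: sqrtCK.
have hu2 : u ^+ (2 * n) = -1 by rewrite exprM hu.
have Imu : 0 <= 'Im u by apply: Im_rootC_ge0.
have Reu1 : 'Re u <= 'Re y := rootC_Re_max n20 hu2 Imu.
have Reu2 : - 'Re u <= 'Re y.
  have := rootC_Re_max n20 (root_even_conj _ _ ev hu2).
  by rewrite !raddfN /= Im_conj opprK Re_conj => /(_ Imu).
have ny : 'Re y ^+ 2 + 'Im y ^+ 2 = 1.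
  by rewrite -normC2_Re_Im (norm_root_unity n20 hy) expr1n.
have nu : 'Re u ^+ 2 + 'Im u ^+ 2 = 1.
  by rewrite -normC2_Re_Im (norm_root_unity n20 hu2) expr1n.
have nw : 'Re w ^+ 2 + 'Im w ^+ 2 = 1.
  by rewrite -normC2_Re_Im (norm_root_unity n0 hw) expr1n.
have nv : 'Re v ^+ 2 + 'Im v ^+ 2 = 1.
  by rewrite -normC2_Re_Im (norm_root_unity n0 hv) expr1n.
have eRw : 'Re w = 'Re y ^+ 2 - 'Im y ^+ 2 by rewrite /w expr2 ReM -!expr2.
have eRv : 'Re v = 'Re u ^+ 2 - 'Im u ^+ 2 by rewrite -hu expr2 ReM -!expr2.
have le2 : 'Re v <= 'Re w.
  rewrite -subr_ge0.
  have -> : 'Re w - 'Re v = 2 * (('Re y - 'Re u) * ('Re y + 'Re u)).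
    rewrite eRw eRv.
    have -> : 'Im y ^+ 2 = 1 - 'Re y ^+ 2 by rewrite -ny; ring.
    have -> : 'Im u ^+ 2 = 1 - 'Re u ^+ 2 by rewrite -nu; ring.
    ring.
  rewrite mulr_ge0 // ?ler0n // mulr_ge0 // ?subr_ge0 //.
  by rewrite -[X in _ + X]opprK subr_ge0.
have eRe : 'Re w = 'Re v by apply/le_anti; rewrite le1 le2.
have eIm : 'Im w = 'Im v.
  have : ('Im w - 'Im v) * ('Im w + 'Im v) = 0.
    have -> : ('Im w - 'Im v) * ('Im w + 'Im v) = 'Im w ^+ 2 - 'Im v ^+ 2 by ring.
    have -> : 'Im w ^+ 2 = 1 - 'Re w ^+ 2 by rewrite -nw; ring.
    rewrite -eRe in nv.
    have -> : 'Im v ^+ 2 = 1 - 'Re w ^+ 2 by rewrite -nv; ring.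
    ring.
  move/eqP; rewrite mulf_eq0 subr_eq0 => /orP[/eqP //|].
  by rewrite paddr_eq0 // => /andP[/eqP -> /eqP ->].
by rewrite [w]Crect [v]Crect eRe eIm.
Qed.

Lemma zeta_n n : (0 < n)%N -> zeta n ^+ n = 1.
Proof. by move=> n0; rewrite /zeta -exprM mulnC exprM rootCK // sqrrN expr1n. Qed.

Lemma zeta_sq n : (0 < n)%N -> zeta (2 * n) ^+ 2 = zeta n.
Proof. by move=> n0; rewrite /zeta root2n. Qed.

Lemma zeta_pow2 a b : zeta (2 ^ (a + b)) ^+ (2 ^ b) = zeta (2 ^ a).
Proof.
elim: b => [|b IH]; first by rewrite addn0 expr1.
by rewrite addnS !expnS exprM zeta_sq ?expn_gt0.
Qed.

Lemma zeta2 : zeta 2 = -1.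
Proof. by rewrite /zeta rootCK. Qed.

Lemma Im_zeta_ge0 n : ~~ odd n -> (0 < n)%N -> 0 <= 'Im (zeta n).
Proof.
move=> ev n0; rewrite /zeta expr2 ImM.
have n1 : (1 < n)%N by case: n n0 ev => [|[|]].
by rewrite addr_ge0 // mulr_ge0 // ?Re_root_ge0 // Im_rootC_ge0.
Qed.

Lemma zeta4 : zeta 4 = 'i.
Proof.
have h : zeta 4 ^+ 2 = -1 by rewrite (@zeta_sq 2) // zeta2.
have : (zeta 4 - 'i) * (zeta 4 + 'i) = 0.
  have -> : (zeta 4 - 'i) * (zeta 4 + 'i) = zeta 4 ^+ 2 - 'i ^+ 2 by ring.
  by rewrite h sqrCi subrr.
move/eqP; rewrite mulf_eq0 subr_eq0 addr_eq0 => /orP[/eqP //|/eqP h2].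
have := @Im_zeta_ge0 4 isT isT; rewrite h2 raddfN /= Im_i.
by rewrite oppr_ge0 ler10.
Qed.

Definition z8 : algC := (1 + 'i) / sqrtC 2.

Lemma sqrtC2_neq0 : sqrtC 2 != 0 :> algC.
Proof. by rewrite sqrtC_eq0 pnatr_eq0. Qed.

Lemma zeta8 : zeta 8 = z8.
Proof.
have h : zeta 8 ^+ 2 = 'i by rewrite (@zeta_sq 4) // zeta4.
have ha : z8 ^+ 2 = 'i.
  rewrite /z8 expr_div_n sqrtCK.
  have -> : (1 + 'i) ^+ 2 = 1 + 'i ^+ 2 + 2 * 'i :> algC by ring.
  by rewrite sqrCi; field.
have : (zeta 8 - z8) * (zeta 8 + z8) = 0.
  have -> : (zeta 8 - z8) * (zeta 8 + z8) = zeta 8 ^+ 2 - z8 ^+ 2 by ring.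
  by rewrite h ha subrr.
move/eqP; rewrite mulf_eq0 subr_eq0 addr_eq0 => /orP[/eqP //|/eqP h2].
have hIm : 'Im z8 = (sqrtC 2)^-1.
  rewrite /z8 mulrC ImMl; last first.
    by rewrite rpredV; apply: ger0_real; rewrite sqrtC_ge0 ler0n.
  rewrite raddfD /= Im_i.
  have -> : 'Im (1 : algC) = 0 by apply/(Creal_ImP _); rewrite rpred1.
  by rewrite add0r mulr1.
have := @Im_zeta_ge0 8 isT isT; rewrite h2 raddfN /= hIm oppr_ge0.
have : 0 < (sqrtC 2)^-1 :> algC by rewrite invr_gt0 sqrtC_gt0 ltr0n.
by move=> /lt_geF ->.
Qed.

Lemma zeta8_4 : zeta 8 ^+ 4 = -1.
Proof. by rewrite (_ : 4 = 2 * 2)%N // exprM (@zeta_sq 4) // zeta4 sqrCi. Qed.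

Lemma zeta8_sum : zeta 8 + zeta 8 ^+ 3 = 'i * sqrtC 2.
Proof.
have h : zeta 8 ^+ 2 = 'i by rewrite (@zeta_sq 4) // zeta4.
have -> : zeta 8 + zeta 8 ^+ 3 = zeta 8 * (1 + zeta 8 ^+ 2) by ring.
rewrite h zeta8 /z8.
have e : sqrtC 2 ^+ 2 = 2 :> algC by rewrite sqrtCK.
have n2 := sqrtC2_neq0.
apply: (mulIf n2).
rewrite mulrAC divfK // -mulrA -expr2 e.
have -> : (1 + 'i) * (1 + 'i) = 1 + 'i ^+ 2 + 2 * 'i :> algC by ring.
by rewrite sqrCi; ring.
Qed.
Section Gauss.
Variable F : finFieldType.
Variables p s : nat.
Hypothesis cardF : #|F| = (p ^ s)%N.
Hypothesis p0 : (0 < p)%N.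

Lemma mcharX (psi : F -> algC) : is_mchar psi -> forall x n, psi (x ^+ n) = psi x ^+ n.
Proof.
case=> _ h1 hM x; elim=> [|n IH]; first by rewrite !expr0.
by rewrite !exprS hM IH.
Qed.

Lemma mchar_conjP (psi : F -> algC) : is_mchar psi -> is_mchar (mchar_conj psi).
Proof.
case=> h0 h1 hM; split; rewrite /mchar_conj ?h0 ?h1 ?rmorph0 ?rmorph1 //.
by move=> x y; rewrite hM rmorphM.
Qed.

Lemma gauss_ext (f g : F -> algC) : (forall x, f x = g x) -> gauss p s f = gauss p s g.
Proof. by move=> h; apply: eq_bigr => x _; rewrite h. Qed.

Lemma s_gt0 : (0 < s)%N.
Proof.
have := finNzRing_gt1 F; rewrite cardF.
by case: s => //; rewrite expn0.
Qed.

Lemma trF_frob (x : F) : trF p s (x ^+ p) = trF p s x.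
Proof.
rewrite /trF; case: s cardF s_gt0 => // s' cF _.
rewrite big_ord_recr big_ord_recl /= expn0 expr1.
rewrite -exprM -expnS -cF expf_card addrC; congr (_ + _).
by apply: eq_bigr => i _; rewrite -exprM -expnS.
Qed.

Lemma frob_inj : injective (fun x : F => x ^+ p).
Proof.
apply: (can_inj (g := fun x : F => x ^+ (p ^ s.-1))) => x.
by rewrite -exprM -expnS prednK ?s_gt0 // -cardF expf_card.
Qed.

Lemma gauss_frob (psi : F -> algC) k : is_mchar psi ->
  gauss p s (mchar_pow psi (k * p)) = gauss p s (mchar_pow psi k).
Proof.
move=> hpsi; rewrite /gauss [RHS](reindex_inj frob_inj) /=.
apply: eq_bigr => x _; rewrite /trN trF_frob; congr (_ * _).
rewrite /mchar_pow expf_eq0 p0 /=; case: ifP => // _.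
by rewrite mcharX // -exprM mulnC.
Qed.

Lemma gauss_frobX (psi : F -> algC) k a : is_mchar psi ->
  gauss p s (mchar_pow psi (k * p ^ a)) = gauss p s (mchar_pow psi k).
Proof.
move=> hpsi; elim: a => [|a IH]; first by rewrite expn0 muln1.
by rewrite expnSr mulnA gauss_frob.
Qed.

End Gauss.

Section NumTh.
Variable p : nat.
Hypothesis hp : (p %% 8 = 3 \/ p %% 8 = 5)%N.

Lemma keyK k : (1 <= k)%N -> exists q, (p ^ (2 ^ k) = 1 + 2 ^ (k + 2) + 2 ^ (k + 3) * q)%N.
Proof.
elim: k => [//|k IH] _.
case: k IH => [_|k IH].
  have e := divn_eq p 8; move: (p %/ 8)%N e => a e.
  case: hp => h; rewrite h in e; rewrite e.
    by exists (4 * a ^ 2 + 3 * a)%N; ring.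
  by exists (4 * a ^ 2 + 5 * a + 1)%N; ring.
have [q hq] := IH isT.
exists (q + 2 ^ k.+1 * (1 + 2 * q) ^ 2)%N.
rewrite expnS mulnC expnM hq.
rewrite !expnD (expnS 2 k.+1); move: (2 ^ k.+1)%N => T; ring.
Qed.

Definition inA (j : nat) := (j %% 8 == 1)%N || (j %% 8 == p %% 8)%N.

Lemma cover r j : (3 <= r)%N -> odd j -> inA j ->
  exists a (c : int), (p ^ a)%N%:Z = j%:Z + (2 ^ r)%N%:Z * c.
Proof.
move=> + oj hA; elim: r => [//|r IH] hr.
case: (leqP r 2) => hr2.
  have -> : r.+1 = 3 by lia.
  have e := divn_eq j 8; have e2 := divn_eq p 8.
  case/orP: hA => /eqP h.
    exists 0%N, (- (j %/ 8)%N%:Z); rewrite expn0 /=.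
    rewrite h in e; rewrite [in RHS]e; lia.
  exists 1%N, ((p %/ 8)%N%:Z - (j %/ 8)%N%:Z); rewrite expn1 /=.
  rewrite h in e; rewrite [in RHS]e {1}e2; lia.
have [a [c hc]] := IH hr2.
have hc2 : c = 2 * (c %/ 2)%Z + (c %% 2)%Z /\ (0 <= c %% 2 < 2)%Z by lia.
move: (c %/ 2)%Z (c %% 2)%Z hc2 => c' b [ec hb].
have [b0|b1] : b = 0 \/ b = 1 by lia.
  exists a, c'; rewrite hc ec b0 addr0 expnS PoszM; ring.
have [q hq] := @keyK (r - 2) ltac:(lia).
have er : (r - 2 + 2 = r)%N by lia.
have er3 : (r - 2 + 3 = r.+1)%N by lia.
rewrite er er3 in hq.
exists (a + 2 ^ (r - 2))%N.
have ej : (j = 2 * j./2 + 1)%N by rewrite -{1}(odd_double_half j) oj -muln2 addnC mulnC.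
move: (j./2) ej => j' ej.
have eT : (2 ^ r = 2 * 2 ^ r.-1)%N by rewrite -expnS prednK //; lia.
move: (2 ^ r.-1)%N eT => T' eT.
exists ((j' + 1)%:Z + j%:Z * q%:Z + c' * (1 + (2 ^ r)%N%:Z + 2 * (2 ^ r)%N%:Z * q%:Z) + T'%:Z + (2 ^ r)%N%:Z * q%:Z).
rewrite expnD PoszM hq hc ec b1 expnS eT ej.
rewrite !PoszD !PoszM /=; ring.
Qed.

Lemma cover_neg r j : (3 <= r)%N -> odd j -> ~~ inA j ->
  exists a (c : int), (p ^ a)%N%:Z + j%:Z = (2 ^ r)%N%:Z * c.
Proof.
move=> hr oj hA.
have eM : (2 ^ r = 8 * 2 ^ (r - 3))%N by rewrite -[in LHS](subnKC hr) expnD.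
move: (2 ^ (r - 3))%N eM => M eM.
have M1 : (1 <= M)%N.
  by case: M eM => //; rewrite muln0 => /eqP; rewrite expn_eq0.
have hMj : (j <= M * j)%N by rewrite leq_pmull.
have oj' : odd (8 * M * j - j).
  rewrite oddB ?oj ?oddM //=.
  by rewrite -mulnA; lia.
have hA' : inA (8 * M * j - j).
  move: hA; rewrite /inA => hA.
  have oj2 : (j %% 2 = 1)%N by rewrite modn2 oj.
  move: hMj; move: (M * j)%N => Mj hMj.
  rewrite -mulnA.
  case: hp => h; rewrite h in hA *; lia.
have [a [c hc]] := @cover r _ hr oj' hA'.
exists a, (j%:Z + c); rewrite hc eM.
rewrite -subzn; last by lia.
rewrite !PoszM; ring.
Qed.

End NumTh.

Section Chars.
Variable F : finFieldType.
Variables p s m : nat.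
Variable lam : F -> algC.
Hypothesis cardF : #|F| = (p ^ s)%N.
Hypothesis p0 : (0 < p)%N.
Hypothesis hp : (p %% 8 = 3 \/ p %% 8 = 5)%N.
Hypothesis hlam : mchar_order lam (2 ^ m).

Let N := (2 ^ m)%N.

Lemma lam_mchar : is_mchar lam.
Proof. by case: hlam. Qed.

Lemma lamN {x : F} : x != 0 -> lam x ^+ N = 1.
Proof. by case: hlam => _ _ h _; apply: h. Qed.

Lemma lam_neq0 {x : F} : x != 0 -> lam x != 0.
Proof.
move=> /lamN h; apply/eqP => h0; move: h; rewrite h0 expr0n.
by rewrite /N expn_eq0 /= => /eqP; rewrite eq_sym oner_eq0.
Qed.

Lemma gauss_mod k k' (c : int) : k%:Z = k'%:Z + N%:Z * c ->
  gauss p s (mchar_pow lam k) = gauss p s (mchar_pow lam k').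
Proof.
move=> e; apply: gauss_ext => x; rewrite /mchar_pow; case: ifP => // /negbT x0.
have z0 := lam_neq0 x0.
have -> : lam x ^+ k = lam x ^ k%:Z by [].
rewrite e expfzDr // -exprz_exp.
have -> : lam x ^ N%:Z = 1 by exact: lamN x0.
by rewrite exp1rz mulr1.
Qed.

Lemma conj_pow k (x : F) : mchar_pow (mchar_conj lam) k x = mchar_pow lam (k * (N - 1)) x.
Proof.
rewrite /mchar_pow /mchar_conj; case: ifP => // /negbT x0.
have z0 := lam_neq0 x0; have hN := lamN x0.
suff -> : (lam x)^* = lam x ^+ (N - 1) by rewrite -exprM mulnC.
have N0 : (0 < N)%N by rewrite expn_gt0.
have n1 : `|lam x| = 1.
  apply/eqP; rewrite -(pexpr_eq1 N0) ?normr_ge0 // -normrX hN normr1 //.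
apply: (mulfI z0); rewrite -exprS subn1 prednK // hN.
by rewrite -normCK n1 expr1n.
Qed.

Lemma N_split r : (r <= m)%N -> (2 ^ (m - r) * 2 ^ r = N)%N.
Proof. by move=> h; rewrite -expnD subnK. Qed.

Lemma gauss_inA r j : (3 <= r <= m)%N -> odd j -> inA p j ->
  gauss p s (mchar_pow lam (2 ^ (m - r) * j)) = gauss p s (mchar_pow lam (2 ^ (m - r))).
Proof.
move=> /andP[r3 rm] oj hA.
have [a [c hc]] := @cover p hp r j r3 oj hA.
rewrite -[in RHS](@gauss_frobX F p s cardF p0 _ _ a lam_mchar).
apply: (@gauss_mod _ _ (- c)).
rewrite !PoszM hc -(@N_split r rm) !PoszM; ring.
Qed.

Lemma gauss_notA r j : (3 <= r <= m)%N -> odd j -> ~~ inA p j ->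
  gauss p s (mchar_pow lam (2 ^ (m - r) * j)) =
  gauss p s (mchar_pow (mchar_conj lam) (2 ^ (m - r))).
Proof.
move=> /andP[r3 rm] oj hA.
have [a [c hc]] := @cover_neg p hp r j r3 oj hA.
rewrite -[in RHS](@gauss_frobX F p s cardF p0 _ _ a (@mchar_conjP F lam lam_mchar)).
rewrite (@gauss_ext F p s _ _ (conj_pow _)).
have N1 : (1 <= N)%N by rewrite expn_gt0.
apply: (@gauss_mod _ _ (c - (2 ^ (m - r) * p ^ a)%N%:Z)).
rewrite !PoszM -subzn //.
have -> : j%:Z = (2 ^ r)%N%:Z * c - (p ^ a)%N%:Z by rewrite -hc; ring.
rewrite -(@N_split r rm) !PoszM; ring.
Qed.

Lemma gauss_3X : (2 <= m)%N ->
  gauss p s (mchar_pow lam (2 ^ (m - 2) * 3)) =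
  gauss p s (mchar_pow (mchar_conj lam) (2 ^ (m - 2))).
Proof.
move=> m2; rewrite (@gauss_ext F p s _ _ (conj_pow _)).
have N1 : (1 <= N)%N by rewrite expn_gt0.
apply: (@gauss_mod _ _ (1 - (2 ^ (m - 2))%N%:Z)).
rewrite !PoszM -subzn // -(@N_split 2 m2) !PoszM /=; ring.
Qed.

End Chars.

Section Quad.
Variable F : finFieldType.
Hypothesis two0 : (2 : F) != 0.

Definition sqset : {set F} := [set x | (x != 0) && [exists y, y ^+ 2 == x]].
Definition nzset : {set F} := [set x : F | x != 0].

Lemma card_nz_le : (#|nzset| <= 2 * #|sqset|)%N.
Proof.
rewrite -sum1_card (partition_big (fun y : F => y ^+ 2) (mem sqset)); last first.
  move=> y; rewrite !inE => y0; rewrite expf_neq0 //=.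
  by apply/existsP; exists y.
rewrite mulnC -sum_nat_const; apply: leq_sum => x; rewrite -[mem sqset x]/(x \in sqset) inE => /andP[x0 /existsP[z /eqP hz]].
rewrite sum1dep_card.
apply: (@leq_trans #|[set z; - z]|); last by rewrite cards2; case: (_ != _).
apply: subset_leq_card; apply/subsetP => y; rewrite !inE => /andP[_ /eqP].
rewrite -hz => /eqP; rewrite -subr_eq0.
have -> : y ^+ 2 - z ^+ 2 = (y - z) * (y + z) by ring.
by rewrite mulf_eq0 subr_eq0 addr_eq0.
Qed.

Lemma prod_nonsq (x0 : F) : x0 != 0 -> ~~ [exists y, y ^+ 2 == x0] ->
  forall x : F, x != 0 -> ~~ [exists y, y ^+ 2 == x] ->
  exists2 s : F, x = x0 * s & [exists y, y ^+ 2 == s].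
Proof.
move=> x00 nsq0.
set U := sqset :|: [set x0 * s | s in sqset].
have dis : sqset :&: [set x0 * s | s in sqset] = set0.
  apply/setP => x; rewrite !inE; apply/negbTE; apply/negP => /andP[/andP[x0' /existsP[y /eqP hy]]].
  case/imsetP => s; rewrite inE => /andP[s0 /existsP[z /eqP hz]] e.
  move/negP: nsq0; apply; apply/existsP; exists (y / z).
  have z0 : z != 0 by apply: contraNneq s0 => ez; rewrite -hz ez expr0n.
  rewrite expr_div_n hy hz e mulfK //.
have cU : #|U| = #|nzset|.
  apply/eqP; rewrite eqn_leq; apply/andP; split.
    apply: subset_leq_card; apply/subsetP => x; rewrite !inE => /orP[/andP[//]|].
    case/imsetP => s; rewrite inE => /andP[s0 _] ->.
    by rewrite mulf_neq0.
  rewrite /U cardsU dis cards0 subn0 card_imset; last exact: mulfI.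
  by rewrite addnn -mul2n card_nz_le.
have sub : U \subset nzset.
  apply/subsetP => x; rewrite !inE => /orP[/andP[//]|].
  case/imsetP => s; rewrite inE => /andP[s0 _] ->.
  by rewrite mulf_neq0.
have eU : U = nzset.
  apply/eqP; rewrite eqEcard sub cU leqnn //.
move=> x xnz nsq.
have : x \in U by rewrite eU inE.
rewrite inE => /orP[|/imsetP[s]].
  by rewrite inE (negbTE nsq) andbF.
rewrite inE => /andP[_ hs] ->; by exists s.
Qed.

End Quad.

Section QuadLam.
Variable F : finFieldType.
Variable m : nat.
Variable lam : F -> algC.
Hypothesis hlam : mchar_order lam (2 ^ m).
Hypothesis m1 : (1 <= m)%N.

Lemma lam_sq_pow (y : F) : y != 0 -> lam (y ^+ 2) ^+ (2 ^ (m - 1)) = 1.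
Proof.
move=> y0; case: hlam => hm _ hN _.
rewrite (@mcharX F lam hm) -exprM -expnS subn1 prednK //.
exact: hN.
Qed.

Lemma quad_eq (x : F) : mchar_pow lam (2 ^ (m - 1)) x = quad_char x.
Proof.
rewrite /mchar_pow /quad_char; case: ifP => // /negbT x0.
case: ifP => [/existsP[y /eqP hy]|/negbT nsq].
  by rewrite -hy lam_sq_pow //; apply: contraNneq x0 => ey; rewrite -hy ey expr0n.
case: hlam => hm _ hN hord.
have hM := hm; case: hM => _ _ hmul.
have : (lam x ^+ (2 ^ (m - 1))) ^+ 2 == 1.
  by rewrite -exprM -expnSr subn1 prednK // hN.
rewrite sqrf_eq1 => /orP[/eqP h1|/eqP //].
exfalso.
have [|z z0 hz] := hord (2 ^ (m - 1))%N.
  by rewrite expn_gt0 /= ltn_exp2l // subn1 prednK // ltnSn.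
apply: (negP hz); apply/eqP.
case: (boolP [exists y, y ^+ 2 == z]) => [/existsP[y /eqP hy]|nz].
  rewrite -hy lam_sq_pow //; apply: contraNneq z0 => ey; by rewrite -hy ey expr0n.
have [s ez /existsP[y /eqP hy]] := @prod_nonsq F _ x0 nsq _ z0 nz.
rewrite ez in z0 *.
have s0 : s != 0 by apply: contraNneq z0 => es; rewrite es mulr0.
rewrite hmul exprMn h1 mul1r -hy lam_sq_pow //.
by apply: contraNneq s0 => ey; rewrite -hy ey expr0n.
Qed.

End QuadLam.

Lemma zexp (x : algC) a b (c : int) : x ^ ((a * b)%N%:Z * c) = ((x ^+ a) ^ c) ^+ b.
Proof.
rewrite -[x ^+ a]/(x ^ (a%:Z)) -[(_ ^ c) ^+ b]/(((x ^ (a%:Z)) ^ c) ^ (b%:Z)).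
by rewrite !exprz_exp PoszM; congr (_ ^ _); ring.
Qed.

Lemma split8 n (f : nat -> algC) :
  \sum_(j < (n * 8)%N | odd j) f j =
  \sum_(l < n) (f (l * 8 + 1)%N + f (l * 8 + 3)%N + f (l * 8 + 5)%N + f (l * 8 + 7)%N).
Proof.
rewrite -(big_mkord (fun j => odd j)).
elim: n => [|n IH]; first by rewrite big_geq // big_ord0.
rewrite big_ord_recr /= -IH mulSn addnC.
rewrite (@big_cat_nat _ _ _ (n * 8)%N) ?leq_addr //=; apply: f_equal.
have e : \sum_((n * 8)%N <= i < (n * 8 + 8)%N | odd i) f i = \sum_(0 <= i < 8 | odd (i + n * 8)%N) f (i + n * 8)%N.
  by rewrite -{1}(add0n (n * 8)%N) big_addn addKn.
rewrite e big_mkcond !big_nat_recl // big_geq //=.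
rewrite add0n !oddM /= !negbK !addr0 ?add0r ![(_ + n * 8)%N]addnC andbF /= !add0r.
by rewrite !addrA.
Qed.

Lemma geom1 n : \sum_(l < n) (1 : algC) ^+ l = n%:R.
Proof. by rewrite (eq_bigr (fun _ => 1)) ?sumr_const ?card_ord // => i _; rewrite expr1n. Qed.

Lemma geom0 (x : algC) n : x != 1 -> x ^+ n = 1 -> \sum_(l < n) x ^+ l = 0.
Proof.
move=> x1 xn; have := subrX1 x n; rewrite xn subrr => /esym/eqP.
by rewrite mulf_eq0 subr_eq0 (negbTE x1) => /eqP.
Qed.

Lemma zeta_one a b : (a <= b)%N -> zeta (2 ^ a) ^+ (2 ^ b) = 1.
Proof.
move=> ab; rewrite -(subnKC ab) expnD exprM zeta_n ?expn_gt0 // expr1n.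
reflexivity.
Qed.

Lemma base_le m r t : (r <= t)%N -> (t <= m)%N -> zeta (2 ^ (m - t)) ^+ (2 ^ (m - r)) = 1.
Proof. by move=> rt tm; apply: zeta_one; apply: leq_sub2l. Qed.

Lemma base_gt m r t : (t < r)%N -> (r <= m)%N -> zeta (2 ^ (m - t)) ^+ (2 ^ (m - r)) = zeta (2 ^ (r - t)).
Proof.
move=> tr rm; rewrite -(zeta_pow2 (r - t) (m - r)); congr (zeta (2 ^ _) ^+ _); lia.
Qed.

Lemma exprz_modn (x : algC) (c : int) n : (0 < n)%N -> x ^+ n = 1 ->
  x ^ c = x ^+ `|(c %% n%:Z)%Z|.
Proof.
move=> n0 xn.
have x0 : x != 0.
  by apply: contra_eq_neq xn => ->; rewrite expr0n gtn_eqF // eq_sym oner_neq0.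
have nz : n%:Z != 0 by rewrite eqz_nat -lt0n.
rewrite {1}(divz_eq c n%:Z) expfzDr // (mulrC (c %/ n)%Z) -exprz_exp.
have -> : x ^ n%:Z = 1 by exact: xn.
rewrite exp1rz mul1r.
by rewrite -{1}(gez0_abs (modz_ge0 c nz)).
Qed.

Lemma exprz_natC (x : algC) (c : int) k : (x ^ c) ^+ k = (x ^+ k) ^ c.
Proof.
rewrite -[(x ^ c) ^+ k]/((x ^ c) ^ (k%:Z)) -[x ^+ k]/(x ^ (k%:Z)).
by rewrite !exprz_exp mulrC.
Qed.

Lemma Wr_gen (GA GB w : algC) (b n : nat) :
  \sum_(j < (n * 8)%N | odd j) (if (j %% 8 == 1)%N || (j %% 8 == b)%N then GA else GB) * w ^+ j
  = (\sum_(l < n) (w ^+ 8) ^+ l) *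
    (GA * w + (if (3 == b)%N then GA else GB) * w ^+ 3
            + (if (5 == b)%N then GA else GB) * w ^+ 5
            + (if (7 == b)%N then GA else GB) * w ^+ 7).
Proof.
rewrite (split8 n (fun j => (if (j %% 8 == 1)%N || (j %% 8 == b)%N then GA else GB) * w ^+ j)).
rewrite mulr_suml; apply: eq_bigr => l _.
rewrite !modnMDl /= !exprD -!exprM ![(8 * l)%N]mulnC.
set c3 := if _ then _ else _; set c5 := if _ then _ else _; set c7 := if _ then _ else _.
rewrite expr1; ring.
Qed.

#[local] Arguments zeta : simpl never.

Lemma neg1_c0 (c0 : int) : (`|c0| %% 2 = 1)%N -> (-1 : algC) ^ c0 = -1.
Proof.
move=> oc; rewrite (@exprz_modn _ _ 2) //; last by rewrite sqrrN expr1n.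
have -> : `|(c0 %% 2%:Z)%Z|%N = 1%N by lia.
by rewrite expr1.
Qed.

Lemma i_c0_sq (c0 : int) : (`|c0| %% 2 = 1)%N -> ('i ^ c0 : algC) ^+ 2 = -1.
Proof. by move=> oc; rewrite exprz_natC sqrCi neg1_c0. Qed.

Lemma z8_mod k : zeta 8 ^+ k = zeta 8 ^+ (k %% 8).
Proof. by rewrite expr_mod // zeta_n. Qed.

Lemma pow4_rw (x : algC) : x ^+ 4 = -1 ->
  [/\ x ^+ 5 = - x, x ^+ 7 = - x ^+ 3 & x ^+ 8 = 1].
Proof.
move=> h; split.
- by rewrite (_ : 5 = 4 + 1)%N // exprD h expr1 mulN1r.
- by rewrite (_ : 7 = 4 + 3)%N // exprD h mulN1r.
- by rewrite (_ : 8 = 4 * 2)%N // exprM h sqrrN expr1n.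
Qed.

Lemma pow2_rw (x : algC) : x ^+ 2 = -1 ->
  [/\ x ^+ 3 = - x, x ^+ 5 = x, x ^+ 7 = - x & x ^+ 8 = 1].
Proof.
move=> h.
have h4 : x ^+ 4 = 1 by rewrite (_ : 4 = 2 * 2)%N // exprM h sqrrN expr1n.
split.
- by rewrite exprS h mulrN1.
- by rewrite exprS h4 mulr1.
- by rewrite (_ : 7 = 4 + 2 + 1)%N // !exprD h4 h mul1r expr1 mulN1r.
- by rewrite (_ : 8 = 4 * 2)%N // exprM h4 expr1n.
Qed.

Lemma z8pow a b : (zeta 8 ^+ a) ^+ b = zeta 8 ^+ (a * b).
Proof. by rewrite exprM. Qed.

Lemma z8_5 : zeta 8 ^+ 5 = - zeta 8.
Proof. by have [] := @pow4_rw _ zeta8_4. Qed.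

Lemma z8_7 : zeta 8 ^+ 7 = - zeta 8 ^+ 3.
Proof. by have [] := @pow4_rw _ zeta8_4. Qed.

Lemma fin3 (GA GB w v : algC) (n : nat) : w ^+ 4 = -1 -> w + w ^+ 3 = v ->
  n%:R * (GA * w + GB * w ^+ 3 + GA * w ^+ 5 + GB * w ^+ 7) = 0 /\
  n%:R * (GA * w + GA * w ^+ 3 + GB * w ^+ 5 + GB * w ^+ 7) = n%:R * v * (GA - GB).
Proof.
move=> h4 hv; have [w5 w7 _] := @pow4_rw _ h4.
rewrite w5 w7; split; first by ring.
have -> : w ^+ 3 = v - w by rewrite -hv; ring.
ring.
Qed.

Lemma neg1_neq1 : (-1 : algC) != 1.
Proof. by rewrite lt_eqF // (lt_trans (ltrN10 _) ltr01). Qed.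

Section Main3.
Variable F : finFieldType.
Variables p s m : nat.
Variable lam : F -> algC.
Hypothesis cardF : #|F| = (p ^ s)%N.
Hypothesis p0 : (0 < p)%N.
Hypothesis hp : (p %% 8 = 3 \/ p %% 8 = 5)%N.
Hypothesis hlam : mchar_order lam (2 ^ m).
Variables (t : nat) (c0 : int).
Hypothesis tm : (t <= m)%N.
Hypothesis oc : (`|c0| %% 2 = 1)%N.

Lemma WE r : Wsum p s m lam r t c0 =
  \sum_(j < 2 ^ r | odd j) gauss p s (mchar_pow lam (2 ^ (m - r) * j)) *
     ((zeta (2 ^ (m - t)) ^+ (2 ^ (m - r))) ^ c0) ^+ j.
Proof. by apply: eq_bigr => j _; rewrite zexp. Qed.

Lemma W3 r : (3 <= r <= m)%N ->
  let GA := gauss p s (mchar_pow lam (2 ^ (m - r))) in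
  let GB := gauss p s (mchar_pow (mchar_conj lam) (2 ^ (m - r))) in
  Wsum p s m lam r t c0 =
              (if (r <= t)%N then (2 ^ (r - 2))%:R * (GA + GB)
               else if r == t.+1 then - ((2 ^ (r - 2))%:R * (GA + GB))
               else if (r == t + 2)%N && (p %% 8 == 5)%N then
                 (2 ^ (r - 2))%:R * 'i ^ c0 * (GA - GB)
               else if [&& r == t + 3, p %% 8 == 3 & (c0 %% 8)%Z \in [:: 1%Z; 3%Z]]%N then
                 (2 ^ (r - 3))%:R * 'i * sqrtC 2 * (GA - GB)
               else if [&& r == t + 3, p %% 8 == 3 & (c0 %% 8)%Z \in [:: 5%Z; 7%Z]]%N then
                 - ((2 ^ (r - 3))%:R * 'i * sqrtC 2 * (GA - GB))
               else 0).
Proof.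
move=> hr GA GB; rewrite WE.
have r3 : (3 <= r)%N by case/andP: hr.
have rm : (r <= m)%N by case/andP: hr.
set w := (_ ^ c0).
have e2r : (2 ^ r = 2 ^ (r - 3) * 8)%N by rewrite -[in LHS](subnK r3) expnD.
have e22 : (2 ^ (r - 2) = 2 * 2 ^ (r - 3))%N by rewrite -expnS; congr (2 ^ _)%N; lia.
rewrite e2r.
under eq_bigr => j oj.
  rewrite (_ : gauss _ _ _ = if inA p j then GA else GB); last first.
    case: ifP => hA.
      by rewrite (@gauss_inA F p s m lam cardF p0 hp hlam r j hr).
    by rewrite (@gauss_notA F p s m lam cardF p0 hp hlam r j hr) // hA.
  over.
rewrite /inA Wr_gen.
set n := (2 ^ (r - 3))%N.
rewrite e22 natrM.
case: (leqP r t) => hrt.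
  have wb : w = 1 by rewrite /w (@base_le m r t) // exp1rz.
  rewrite wb !expr1n geom1.
  by case: hp => ->; rewrite /=; ring.
have wb0 := @base_gt m r t hrt rm.
rewrite /=.
have [k1|[k2|[k3|k4]]] : r = t.+1 \/ r = (t + 2)%N \/ r = (t + 3)%N \/ (t + 4 <= r)%N by lia.
- have wb : w = -1.
    by rewrite /w wb0 (_ : r - t = 1)%N ?zeta2 ?neg1_c0 //; lia.
  have w8 : w ^+ 8 = 1 by rewrite wb; ring.
  have hs : \sum_(l < n) (w ^+ 8) ^+ l = n%:R by rewrite w8; apply: geom1.
  have -> : (r == t.+1) = true by apply/eqP.
  rewrite hs wb.
  by case: hp => ->; rewrite /=; ring.
- have wb : w = 'i ^ c0.
    by rewrite /w wb0 (_ : r - t = 2)%N ?zeta4 //; lia.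
  have [w3 w5 w7 w8] := @pow2_rw _ (@i_c0_sq c0 oc).
  rewrite -wb in w3 w5 w7 w8.
  have hs : \sum_(l < n) (w ^+ 8) ^+ l = n%:R by rewrite w8; apply: geom1.
  rewrite hs w3 w5 w7.
  have -> : (r == t.+1) = false by apply/eqP; lia.
  have -> : (r == t + 2)%N = true by apply/eqP; lia.
  have -> : (r == t + 3)%N = false by apply/eqP; lia.
  rewrite -wb.
  by case: hp => ->; rewrite /=; ring.
- have z8 : zeta (2 ^ (r - t)) = zeta 8 by rewrite (_ : (r - t)%N = 3%N) //; lia.
  have hc : (c0 %% 8)%Z = 1 \/ (c0 %% 8)%Z = 3 \/ (c0 %% 8)%Z = 5 \/ (c0 %% 8)%Z = 7 by lia.
  have wz : w = zeta 8 ^+ `|(c0 %% 8)%Z|.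
    by rewrite /w wb0 z8 (@exprz_modn _ _ 8) // zeta_n.
  have [hw4 hsum] : w ^+ 4 = -1 /\ w + w ^+ 3 =
      (if (c0 %% 8)%Z \in [:: 1%Z; 3%Z] then 'i * sqrtC 2 else - ('i * sqrtC 2)).
    rewrite wz !z8pow.
    case: hc => [h|[h|[h|h]]].
    + rewrite (_ : `|(c0 %% 8)%Z| = 1)%N ?h //; rewrite (z8_mod (_ * 4)) (z8_mod (_ * 3)) /=.
      by rewrite zeta8_4 expr1 zeta8_sum.
    + rewrite (_ : `|(c0 %% 8)%Z| = 3)%N ?h //; rewrite (z8_mod (_ * 4)) (z8_mod (_ * 3)) /=.
      by rewrite zeta8_4 expr1 addrC zeta8_sum.
    + rewrite (_ : `|(c0 %% 8)%Z| = 5)%N ?h //; rewrite (z8_mod (_ * 4)) (z8_mod (_ * 3)) /=.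
      rewrite zeta8_4; split => //.
      by rewrite z8_5 z8_7 -zeta8_sum opprD.
    + rewrite (_ : `|(c0 %% 8)%Z| = 7)%N ?h //; rewrite (z8_mod (_ * 4)) (z8_mod (_ * 3)) /=.
      rewrite zeta8_4; split => //.
      by rewrite z8_5 z8_7 -zeta8_sum opprD addrC.
  have [_ _ w8] := @pow4_rw _ hw4.
  have hs : \sum_(l < n) (w ^+ 8) ^+ l = n%:R by rewrite w8; apply: geom1.
  rewrite hs.
  have -> : (r == t.+1) = false by apply/eqP; lia.
  have -> : (r == t + 2)%N = false by apply/eqP; lia.
  have -> : (r == t + 3)%N = true by apply/eqP; lia.
  have [f1 f2] := @fin3 GA GB w _ n hw4 hsum.
  case: hp => ->; rewrite /=; last by rewrite f1.
  rewrite f2; case: hc => [h|[h|[h|h]]]; rewrite h /=; ring.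
- have hs : \sum_(l < n) (w ^+ 8) ^+ l = 0.
    apply: geom0.
      rewrite /w wb0 exprz_natC (_ : (r - t)%N = (r - t - 3) + 3)%N; last by lia.
      rewrite (_ : 8 = 2 ^ 3)%N // zeta_pow2.
      apply/negP => /eqP h1.
      have : (zeta (2 ^ (r - t - 3)) ^ c0) ^+ (2 ^ (r - t - 4)) = 1 by rewrite h1 expr1n.
      rewrite exprz_natC (_ : (r - t - 3)%N = 1 + (r - t - 4))%N; last by lia.
      rewrite zeta_pow2 zeta2 neg1_c0 // => /eqP; by rewrite (negbTE neg1_neq1).
    rewrite -exprM mulnC -e2r /w wb0 exprz_natC zeta_one ?exp1rz //; lia.
  rewrite hs mul0r.
  have -> : (r == t.+1) = false by apply/eqP; lia.
  have -> : (r == t + 2)%N = false by apply/eqP; lia.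
  have -> : (r == t + 3)%N = false by apply/eqP; lia.
  by [].
Qed.

Lemma W1 : (1 <= m)%N -> Wsum p s m lam 1 t c0 =
  (if t == 0%N then - gauss p s (@quad_char F) else gauss p s (@quad_char F)).
Proof.
move=> m1; rewrite WE expn1 big_mkcond !big_ord_recl big_ord0 /=.
rewrite muln1 (@gauss_ext F p s _ _ (@quad_eq F m lam hlam m1)) add0r addr0 expr1.
case: eqP => [t0|t0].
  rewrite (@base_gt m 1 t) ?t0 // zeta2 neg1_c0 //; by rewrite mulrN1.
rewrite (@base_le m 1 t) ?exp1rz ?mulr1 //; lia.
Qed.

Lemma W2 : (2 <= m)%N ->
  let GA := gauss p s (mchar_pow lam (2 ^ (m - 2))) in
  let GB := gauss p s (mchar_pow (mchar_conj lam) (2 ^ (m - 2))) in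
  Wsum p s m lam 2 t c0 =
    (if (2 <= t)%N then GA + GB
     else if t == 1%N then - (GA + GB)
     else 'i ^ c0 * (GA - GB)).
Proof.
move=> m2 GA GB; rewrite WE (_ : (2 ^ 2)%N = 4%N) // big_mkcond !big_ord_recl big_ord0 /=.
rewrite muln1 (@gauss_3X F p s m lam hlam m2) add0r addr0 !add0r expr1 -/GA -/GB.
case: (leqP 2 t) => t2.
  by rewrite (@base_le m 2 t) // exp1rz expr1n !mulr1.
case: eqP => [t1|t1].
  rewrite (@base_gt m 2 t) ?t1 // (_ : (2 - 1)%N = 1%N) // zeta2 neg1_c0 //.
  ring.
have t0 : t = 0%N by lia.
rewrite (@base_gt m 2 t) ?t0 // (_ : (2 - 0)%N = 2%N) // zeta4.
have [w3 _ _ _] := @pow2_rw _ (@i_c0_sq c0 oc).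
rewrite w3; ring.
Qed.

End Main3.

Theorem lemma14 (F : finFieldType) (p s m : nat) (lam : F -> algC) :
  prime p -> p \in [pchar F] -> #|F| = (p ^ s)%N ->
  (p %% 8 == 3 \/ p %% 8 == 5)%N ->
  (2 ^ m %| p ^ s - 1)%N ->
  (p %% 8 = 3 -> 3 <= m)%N ->
  (p %% 8 = 5 -> 2 <= m)%N ->
  mchar_order lam (2 ^ m) ->
  forall (t : nat) (c0 : int), (t <= m)%N -> odd `|c0|%N ->
  let G := gauss p s in
  let W r := Wsum p s m lam r t c0 in
  let S r := G (mchar_pow lam (2 ^ (m - r))) + G (mchar_pow (mchar_conj lam) (2 ^ (m - r))) in
  let D r := G (mchar_pow lam (2 ^ (m - r))) - G (mchar_pow (mchar_conj lam) (2 ^ (m - r))) in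
  [/\ W 1%N = (if t == 0%N then - G (@quad_char F) else G (@quad_char F)),
      W 2%N = (if (2 <= t)%N then S 2%N
               else if t == 1%N then - S 2%N
               else 'i ^ c0 * D 2%N) &
      forall r : nat, (3 <= r <= m)%N ->
        W r = (if (r <= t)%N then (2 ^ (r - 2))%:R * S r
               else if r == t.+1 then - ((2 ^ (r - 2))%:R * S r)
               else if (r == t + 2)%N && (p %% 8 == 5)%N then
                 (2 ^ (r - 2))%:R * 'i ^ c0 * D r
               else if [&& r == t + 3, p %% 8 == 3 & (c0 %% 8)%Z \in [:: 1%Z; 3%Z]]%N then
                 (2 ^ (r - 3))%:R * 'i * sqrtC 2 * D r
               else if [&& r == t + 3, p %% 8 == 3 & (c0 %% 8)%Z \in [:: 5%Z; 7%Z]]%N then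
                 - ((2 ^ (r - 3))%:R * 'i * sqrtC 2 * D r)
               else 0)].
Proof.
move=> pr pch cardF hp8 hdvd h3 h5 hlam t c0 tm oc0 G W S D.
have p0 : (0 < p)%N := prime_gt0 pr.
have hp : (p %% 8 = 3 \/ p %% 8 = 5)%N by case: hp8 => /eqP ->; [left|right].
have m2 : (2 <= m)%N by case: hp => h; [move: (h3 h) | move: (h5 h)]; lia.
have oc : (`|c0| %% 2 = 1)%N by rewrite modn2 oc0.
split.
- exact: (@W1 F p s m lam cardF p0 hp hlam t c0 tm oc (ltnW m2)).
- exact: (@W2 F p s m lam cardF p0 hp hlam t c0 tm oc m2).
- move=> r hr; exact: (@W3 F p s m lam cardF p0 hp hlam t c0 tm oc r hr).
Qed.
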